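(* Let $\mathbb{F}$ be an algebraically closed field of characteristic different from $2$ and let $\mathcal{H}_3(\mathcal{O}(\mathbb{F}))$ be the Jordan algebra of self-adjoint $3\times3$ matrices over the octonion algebra $\mathcal{O}(\mathbb{F})$. Then every 2-local inner derivation on $\mathcal{H}_3(\mathcal{O}(\mathbb{F}))$ is a derivation.
   Context: $\mathcal{Q}(\mathbb{F})$ is a quaternion algebra: associative unital with basis $\mathbf{1},i,j,k$, $i^2=\lambda\mathbf{1}$, $j^2=\mu\mathbf{1}$, $ij=-ji=k$ ($\lambda,\mu\neq0$), involution $a\mapsto\bar a$ negating the $i,j,k$ coordinates. $\mathcal{O}(\mathbb{F})=\mathcal{Q}(\mathbb{F})\oplus\mathcal{Q}(\mathbb{F})$ with product $(a,b)(c,d)=(ac+\nu\bar d b,\ da+b\bar c)$ for a fixed nonzero $\nu\in\mathbb{F}$, and involution $\overline{(a,b)}=(\bar a,-b)$ (the octonion/Cayley algebra; over an algebraically closed field it is the split octonions). $\mathcal{H}_3(\mathcal{O}(\mathbb{F}))$ is the 27-dimensional space of $3\times3$ matrices $x$ over $\mathcal{O}(\mathbb{F})$ with $x_{ij}=\overline{x_{ji}}$, with Jordan product $x\circ y=\frac12(xy+yx)$. A derivation is a linear map $D$ with $D(x\circ y)=D(x)\circ y+x\circ D(y)$; an inner derivation is a map $x\mapsto\sum_{k=1}^m(a_k\circ(b_k\circ x)-b_k\circ(a_k\circ x))$; a 2-local inner derivation is a map $\Delta$ (not assumed linear) such that for all $x,y$ there is an inner derivation $D$ with $\Delta(x)=D(x)$,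 $\Delta(y)=D(y)$. *)

(* Defs.v *)
From mathcomp Require Import all_boot all_order all_algebra.
Set Implicit Arguments.
Unset Strict Implicit.
Unset Printing Implicit Defensive.
Import GRing.Theory.
Local Open Scope ring_scope.

(* ---------- Quaternion algebra Q(F) with parameters lam, mu ----------
   basis 1,i,j,k ; i^2 = lam, j^2 = mu, ij = -ji = k.
   Hence k^2 = -lam mu, ik = lam j, ki = -lam j, jk = -mu i, kj = mu i. *)
Record quat (F : Type) := Quat { q0 : F; q1 : F; q2 : F; q3 : F }.
Arguments Quat {F}.

Definition qadd (F : fieldType) (a b : quat F) : quat F :=
  Quat (q0 a + q0 b) (q1 a + q1 b) (q2 a + q2 b) (q3 a + q3 b).
Definition qscale (F : fieldType) (c : F) (a : quat F) : quat F :=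
  Quat (c * q0 a) (c * q1 a) (c * q2 a) (c * q3 a).
Definition qopp (F : fieldType) (a : quat F) : quat F := qscale (-1) a.
Definition qzero (F : fieldType) : quat F := Quat 0 0 0 0.
Definition qconj (F : fieldType) (a : quat F) : quat F :=
  Quat (q0 a) (- q1 a) (- q2 a) (- q3 a).
Definition qmul (F : fieldType) (lam mu : F) (a b : quat F) : quat F :=
  Quat (q0 a * q0 b + lam * (q1 a * q1 b) + mu * (q2 a * q2 b)
          - lam * mu * (q3 a * q3 b))
       (q0 a * q1 b + q1 a * q0 b - mu * (q2 a * q3 b) + mu * (q3 a * q2 b))
       (q0 a * q2 b + q2 a * q0 b + lam * (q1 a * q3 b) - lam * (q3 a * q1 b))
       (q0 a * q3 b + q3 a * q0 b + q1 a * q2 b - q2 a * q1 b).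

(* ---------- Octonion (Cayley) algebra O(F) = Q(F) + Q(F) ----------
   (a,b)(c,d) = (ac + nu conj(d) b, d a + b conj(c)),  conj (a,b) = (conj a, -b). *)
Definition oct (F : Type) := (quat F * quat F)%type.

Definition oadd (F : fieldType) (x y : oct F) : oct F :=
  (qadd x.1 y.1, qadd x.2 y.2).
Definition oscale (F : fieldType) (c : F) (x : oct F) : oct F :=
  (qscale c x.1, qscale c x.2).
Definition ozero (F : fieldType) : oct F := (qzero F, qzero F).
Definition oconj (F : fieldType) (x : oct F) : oct F := (qconj x.1, qopp x.2).
Definition omul (F : fieldType) (lam mu nu : F) (x y : oct F) : oct F :=
  let: (a, b) := x in let: (c, d) := y in
  (qadd (qmul lam mu a c) (qscale nu (qmul lam mu (qconj d) b)),
   qadd (qmul lam mu d a) (qmul lam mu b (qconj c))).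

Definition mat3 (F : Type) := 'I_3 -> 'I_3 -> oct F.

Definition madd (F : fieldType) (x y : mat3 F) : mat3 F :=
  fun i j => oadd (x i j) (y i j).
Definition mscale (F : fieldType) (c : F) (x : mat3 F) : mat3 F :=
  fun i j => oscale c (x i j).
Definition msub (F : fieldType) (x y : mat3 F) : mat3 F :=
  madd x (mscale (-1) y).
Definition mzero (F : fieldType) : mat3 F := fun _ _ => ozero F.

Definition mmul (F : fieldType) (lam mu nu : F) (x y : mat3 F) : mat3 F :=
  fun i j => \big[@oadd F/ozero F]_(k < 3) omul lam mu nu (x i k) (y k j).

Definition hermitian (F : fieldType) (x : mat3 F) : Prop :=
  forall i j, x i j = oconj (x j i).

Definition jmul (F : fieldType) (lam mu nu : F) (x y : mat3 F) : mat3 F :=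
  mscale (2%:R)^-1 (madd (mmul lam mu nu x y) (mmul lam mu nu y x)).

Definition is_derivation (F : fieldType) (lam mu nu : F) (D : mat3 F -> mat3 F)
  : Prop :=
  (forall (a b : F) (x y : mat3 F), hermitian x -> hermitian y ->
      D (madd (mscale a x) (mscale b y)) = madd (mscale a (D x)) (mscale b (D y)))
  /\ (forall x y : mat3 F, hermitian x -> hermitian y ->
      D (jmul lam mu nu x y) =
      madd (jmul lam mu nu (D x) y) (jmul lam mu nu x (D y))).

Definition inner_der (F : fieldType) (lam mu nu : F) (s : seq (mat3 F * mat3 F))
  (x : mat3 F) : mat3 F :=
  foldr (fun ab acc =>
           madd (msub (jmul lam mu nu ab.1 (jmul lam mu nu ab.2 x))
                      (jmul lam mu nu ab.2 (jmul lam mu nu ab.1 x))) acc)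
        (mzero F) s.

Definition herm_pairs (F : fieldType) (s : seq (mat3 F * mat3 F)) : Prop :=
  foldr (fun ab P => [/\ hermitian ab.1, hermitian ab.2 & P]) True s.

Definition two_local_inner (F : fieldType) (lam mu nu : F)
  (Delta : mat3 F -> mat3 F) : Prop :=
  forall x y : mat3 F, hermitian x -> hermitian y ->
    exists s : seq (mat3 F * mat3 F),
      herm_pairs s /\
      Delta x = inner_der lam mu nu s x /\ Delta y = inner_der lam mu nu s y.

(* Main.v *)
Require Import Defs.
From Stdlib Require Import ZArith Lia.
From Stdlib Require Ring_polynom InitialRing BinList FunctionalExtensionality.
From mathcomp Require Import all_boot all_order all_algebra.
From mathcomp Require Import ring zify.
Set Implicit Arguments.
Unset Strict Implicit.
Unset Printing Implicit Defensive.
Import GRing.Theory.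
Local Open Scope ring_scope.

Import Ring_polynom.

Definition P := Pol Z.
Definition pa : P -> P -> P := Padd Z0 Z.add Z.eqb.
Definition pm : P -> P -> P := Pmul Z0 (Zpos xH) Z.add Z.mul Z.eqb.
Definition pn : P -> P := Popp Z.opp.
Definition pe : P -> P -> bool := Peq Z.eqb.
Definition pv (j : positive) : P := mk_X Z0 (Zpos xH) j.
Definition pc (z : Z) : P := Pc z.
Definition p0 : P := Pc Z0.

Definition sqadd (a b : quat P) : quat P :=
  Quat (pa (q0 a) (q0 b)) (pa (q1 a) (q1 b)) (pa (q2 a) (q2 b)) (pa (q3 a) (q3 b)).
Definition sqscale (c : P) (a : quat P) : quat P :=
  Quat (pm c (q0 a)) (pm c (q1 a)) (pm c (q2 a)) (pm c (q3 a)).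
Definition sqopp (a : quat P) := sqscale (pc (Zneg xH)) a.
Definition sqzero : quat P := Quat p0 p0 p0 p0.
Definition sqconj (a : quat P) : quat P := Quat (q0 a) (pn (q1 a)) (pn (q2 a)) (pn (q3 a)).
Definition ps (x y : P) : P := pa x (pn y).
Definition sqmul (lam mu : P) (a b : quat P) : quat P :=
  Quat (ps (pa (pa (pm (q0 a) (q0 b)) (pm lam (pm (q1 a) (q1 b)))) (pm mu (pm (q2 a) (q2 b))))
          (pm (pm lam mu) (pm (q3 a) (q3 b))))
       (pa (ps (pa (pm (q0 a) (q1 b)) (pm (q1 a) (q0 b))) (pm mu (pm (q2 a) (q3 b)))) (pm mu (pm (q3 a) (q2 b))))
       (ps (pa (pa (pm (q0 a) (q2 b)) (pm (q2 a) (q0 b))) (pm lam (pm (q1 a) (q3 b)))) (pm lam (pm (q3 a) (q1 b))))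
       (ps (pa (pa (pm (q0 a) (q3 b)) (pm (q3 a) (q0 b))) (pm (q1 a) (q2 b))) (pm (q2 a) (q1 b))).

Definition soct := (quat P * quat P)%type.
Definition soadd (x y : soct) : soct := (sqadd x.1 y.1, sqadd x.2 y.2).
Definition soscale (c : P) (x : soct) : soct := (sqscale c x.1, sqscale c x.2).
Definition sozero : soct := (sqzero, sqzero).
Definition soconj (x : soct) : soct := (sqconj x.1, sqopp x.2).
Definition somul (lam mu nu : P) (x y : soct) : soct :=
  let: (a, b) := x in let: (c, d) := y in
  (sqadd (sqmul lam mu a c) (sqscale nu (sqmul lam mu (sqconj d) b)),
   sqadd (sqmul lam mu d a) (sqmul lam mu b (sqconj c))).

Record M9 := mk9 { e00 : soct; e01 : soct; e02 : soct; e10 : soct; e11 : soct; e12 : soct;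
  e20 : soct; e21 : soct; e22 : soct }.
Definition mget (m : M9) (i j : nat) : soct :=
  match i, j with
  | 0, 0 => e00 m | 0, 1 => e01 m | 0, _ => e02 m
  | 1, 0 => e10 m | 1, 1 => e11 m | 1, _ => e12 m
  | _, 0 => e20 m | _, 1 => e21 m | _, _ => e22 m end.
Definition tab (f : nat -> nat -> soct) : M9 :=
  mk9 (f 0 0) (f 0 1) (f 0 2) (f 1 0) (f 1 1) (f 1 2) (f 2 0) (f 2 1) (f 2 2).

Section S.
Variables lam mu nu h : P.
Definition smadd (x y : M9) := tab (fun i j => soadd (mget x i j) (mget y i j)).
Definition smscale (c : P) (x : M9) := tab (fun i j => soscale c (mget x i j)).
Definition smsub (x y : M9) := smadd x (smscale (pc (Zneg xH)) y).
Definition smmul (x y : M9) := tab (fun i j =>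
  soadd (somul lam mu nu (mget x i 0) (mget y 0 j))
   (soadd (somul lam mu nu (mget x i 1) (mget y 1 j))
    (soadd (somul lam mu nu (mget x i 2) (mget y 2 j)) sozero))).
Definition sjmul (x y : M9) := smscale h (smadd (smmul x y) (smmul y x)).
Definition sD (a b y : M9) := smsub (sjmul a (sjmul b y)) (sjmul b (sjmul a y)).
End S.

Definition peq_q (a b : quat P) := [&& pe (q0 a) (q0 b), pe (q1 a) (q1 b), pe (q2 a) (q2 b) & pe (q3 a) (q3 b)].
Definition peq_o (a b : soct) := peq_q a.1 b.1 && peq_q a.2 b.2.
Definition peq_m (x y : M9) := all (fun i => all (fun j => peq_o (mget x i j) (mget y i j)) (iota 0 3)) (iota 0 3).

Definition qv (f : nat -> P) (k : nat) : quat P := Quat (f k) (f k.+1) (f k.+2) (f k.+3).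
Definition ov (f : nat -> P) (k : nat) : soct := (qv f k, qv f (k+4)%N).
Definition dg (c : P) : soct := (Quat c p0 p0 p0, sqzero).
Definition herm (f : nat -> P) : M9 :=
  mk9 (dg (f 0%N)) (ov f 3) (ov f 11)
      (soconj (ov f 3)) (dg (f 1%N)) (ov f 19)
      (soconj (ov f 11)) (soconj (ov f 19)) (dg (f 2%N)).
Definition unitf (k : nat) : nat -> P := fun n => if n == k then pc (Zpos xH) else p0.
Definition varf (base : positive) : nat -> P := fun n => pv (base + Pos.of_nat n.+1)%positive.
Definition vlam := pv 1. Definition vmu := pv 2. Definition vnu := pv 3. Definition vh := pv 4.
Definition XX := herm (varf 4).
Definition XA := herm (varf 40).
Definition XB := herm (varf 80).
Definition sj := sjmul vlam vmu vnu vh.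
Definition sDD := sD vlam vmu vnu vh.

Definition stc (m : M9) := tab (fun i j => soconj (mget m j i)).
Definition strace (m : M9) := pa (pa (q0 (mget m 0 0).1) (q0 (mget m 1 1).1)) (q0 (mget m 2 2).1).
Definition checkH := peq_m (sj XX XA) (stc (sj XX XA)).
Definition checkA := pe (strace (sj (sj XX XA) XB)) (strace (sj XX (sj XA XB))).
Definition checkL := peq_m (sj (smadd (smscale (pv 150) XX) (smscale (pv 151) XA)) XB)
   (smadd (smscale (pv 150) (sj XX XB)) (smscale (pv 151) (sj XA XB))).
Definition monc (c : nat) : P := match c with 0 => pc (Zpos xH) | 1 => vlam | 2 => vmu
  | 3 => pm vlam vmu | 4 => vnu | 5 => pm vlam vnu | 6 => pm vmu vnu | _ => pm vlam (pm vmu vnu) end.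
Definition z4 := Zpos (xO (xO xH)).
Definition zc (c : nat) : Z := match c with 0 => z4 | 1 => Z.opp z4 | 2 => Z.opp z4 | 3 => z4
  | 4 => Z.opp z4 | 5 => z4 | 6 => z4 | _ => Z.opp z4 end.
Definition ck (k : nat) : P := if (k < 3)%N then pm (pc (Zpos (xO xH))) vh
  else pm (pc (zc ((k - 3) %% 8))) (pm vh (monc ((k - 3) %% 8))).
Definition checkN := all (fun k => pe (strace (sj XX (herm (unitf k)))) (pm (ck k) (varf 4 k))) (iota 0 27).
Definition checkJ :=
  peq_m (sDD XA XB (sj XX XX)) (smscale (pc (Zpos (xO xH))) (sj (sDD XA XB XX) XX)).


Section Eval.
Variable F : fieldType.

Lemma RthF : ring_theory (0:F) 1 +%R *%R (fun x y => x - y) -%R eq.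
Proof.
apply: mk_rt.
- exact: add0r.
- exact: addrC.
- exact: addrA.
- exact: mul1r.
- exact: mulrC.
- exact: mulrA.
- exact: mulrDl.
- by [].
- exact: subrr.
Qed.
Lemma ReqeF : ring_eq_ext (@GRing.add F) (@GRing.mul F) (@GRing.opp F) eq.
Proof. by split=> x1 x2 -> // y1 y2 ->. Qed.
Definition SthF : Setoid.Setoid_Theory F eq := RelationClasses.eq_equivalence.
Definition phiZ : Z -> F := InitialRing.gen_phiZ 0 1 +%R *%R -%R.
Definition MorphF := InitialRing.gen_phiZ_morph SthF ReqeF RthF.
Definition ARthF := Rth_ARth SthF ReqeF RthF.

Definition ev (l : list F) (p : P) : F := Pphi 0 +%R *%R phiZ l p.

Lemma ev_add l p q : ev l (pa p q) = ev l p + ev l q.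
Proof. exact: (Padd_ok SthF ReqeF ARthF MorphF q p l). Qed.
Lemma ev_mul l p q : ev l (pm p q) = ev l p * ev l q.
Proof. exact: (Pmul_ok SthF ReqeF ARthF MorphF p q l). Qed.
Lemma ev_opp l p : ev l (pn p) = - ev l p.
Proof. exact: (Popp_ok SthF ReqeF ARthF MorphF p l). Qed.
Lemma ev_sub l p q : ev l (ps p q) = ev l p - ev l q.
Proof. by rewrite /ps ev_add ev_opp. Qed.
Lemma ev_var l j : ev l (pv j) = BinList.nth 0 j l.
Proof. exact: esym (mkX_ok SthF ReqeF ARthF MorphF j l). Qed.
Lemma ev_eq l p q : pe p q = true -> ev l p = ev l q.
Proof. move=> H; exact: (Peq_ok SthF ReqeF MorphF p q H l). Qed.
Lemma ev_c0 l : ev l p0 = 0. Proof. by []. Qed.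
Lemma ev_c1 l : ev l (pc (Zpos xH)) = 1. Proof. by []. Qed.
Lemma ev_cm1 l : ev l (pc (Zneg xH)) = -1. Proof. by []. Qed.
Lemma ev_c2 l : ev l (pc (Zpos (xO xH))) = 2%:R. Proof. by rewrite /ev /= /phiZ /=. Qed.

Definition evq l (a : quat P) : quat F := Quat (ev l (q0 a)) (ev l (q1 a)) (ev l (q2 a)) (ev l (q3 a)).
Definition evo l (x : soct) : oct F := (evq l x.1, evq l x.2).
Definition evM l (m : M9) : mat3 F := fun i j => evo l (mget m i j).

Ltac evs := rewrite /= ?(ev_add, ev_mul, ev_sub, ev_opp, ev_c0, ev_c1, ev_cm1).

Lemma evq_add l a b : evq l (sqadd a b) = qadd (evq l a) (evq l b).
Proof. by case: a b => ? ? ? ? [? ? ? ?]; rewrite /evq /=; evs. Qed.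
Lemma evq_scale l c a : evq l (sqscale c a) = qscale (ev l c) (evq l a).
Proof. by case: a => ? ? ? ?; rewrite /evq /=; evs. Qed.
Lemma evq_opp l a : evq l (sqopp a) = qopp (evq l a).
Proof. by rewrite /sqopp evq_scale ev_cm1. Qed.
Lemma evq_conj l a : evq l (sqconj a) = qconj (evq l a).
Proof. by case: a => ? ? ? ?; rewrite /evq /=; evs. Qed.
Lemma evq_zero l : evq l sqzero = qzero F.
Proof. by []. Qed.
Lemma evq_mul l lm mm a b : evq l (sqmul lm mm a b) = qmul (ev l lm) (ev l mm) (evq l a) (evq l b).
Proof. by case: a b => ? ? ? ? [? ? ? ?]; rewrite /evq /=; evs. Qed.

Lemma evo_add l x y : evo l (soadd x y) = oadd (evo l x) (evo l y).
Proof. by rewrite /evo /= !evq_add. Qed.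
Lemma evo_scale l c x : evo l (soscale c x) = oscale (ev l c) (evo l x).
Proof. by rewrite /evo /= !evq_scale. Qed.
Lemma evo_zero l : evo l sozero = ozero F.
Proof. by []. Qed.
Lemma evo_conj l x : evo l (soconj x) = oconj (evo l x).
Proof. by rewrite /evo /= evq_conj evq_opp. Qed.
Lemma evo_mul l lm mm nm x y : evo l (somul lm mm nm x y) =
  omul (ev l lm) (ev l mm) (ev l nm) (evo l x) (evo l y).
Proof.
case: x y => a b [c d]; rewrite /evo /=.
by rewrite !evq_add !evq_mul !evq_scale !evq_mul !evq_conj.
Qed.

Lemma mget_tab f (i j : 'I_3) : mget (tab f) i j = f i j.
Proof. by case: i => [[|[|[|?]]] ?]; case: j => [[|[|[|?]]] ?]. Qed.

Lemma evM_add l x y : evM l (smadd x y) = madd (evM l x) (evM l y).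
Proof.
apply: FunctionalExtensionality.functional_extensionality => i.
apply: FunctionalExtensionality.functional_extensionality => j.
by rewrite /evM /smadd mget_tab evo_add.
Qed.
Lemma evM_scale l c x : evM l (smscale c x) = mscale (ev l c) (evM l x).
Proof.
apply: FunctionalExtensionality.functional_extensionality => i.
apply: FunctionalExtensionality.functional_extensionality => j.
by rewrite /evM /smscale mget_tab evo_scale.
Qed.
Lemma evM_sub l x y : evM l (smsub x y) = msub (evM l x) (evM l y).
Proof. by rewrite /smsub evM_add evM_scale ev_cm1. Qed.
Lemma evM_mul l lm mm nm x y : evM l (smmul lm mm nm x y) =
  mmul (ev l lm) (ev l mm) (ev l nm) (evM l x) (evM l y).
Proof.
apply: FunctionalExtensionality.functional_extensionality => i.
apply: FunctionalExtensionality.functional_extensionality => j.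
rewrite /evM /smmul /mmul mget_tab !big_ord_recl big_ord0 /=.
by rewrite !evo_add !evo_mul.
Qed.
Lemma evM_jmul l lm mm nm x y : ev l (pv 4) = (2%:R)^-1 ->
  evM l (sjmul lm mm nm (pv 4) x y) = jmul (ev l lm) (ev l mm) (ev l nm) (evM l x) (evM l y).
Proof. by move=> Hh; rewrite /sjmul evM_scale evM_add !evM_mul Hh. Qed.

Lemma evq_eq l a b : peq_q a b -> evq l a = evq l b.
Proof. by case/and4P => /(ev_eq l) e0 /(ev_eq l) e1 /(ev_eq l) e2 /(ev_eq l) e3; rewrite /evq e0 e1 e2 e3. Qed.
Lemma evo_eq l a b : peq_o a b -> evo l a = evo l b.
Proof. by case/andP => /(evq_eq l) e1 /(evq_eq l) e2; rewrite /evo e1 e2. Qed.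

Lemma evM_eq l x y : peq_m x y = true -> evM l x = evM l y.
Proof.
move=> H.
apply: FunctionalExtensionality.functional_extensionality => i.
apply: FunctionalExtensionality.functional_extensionality => j.
rewrite /evM; apply: evo_eq.
move/allP: H => H.
have Hi : nat_of_ord i \in iota 0 3 by rewrite mem_iota /= ltn_ord.
have Hj : nat_of_ord j \in iota 0 3 by rewrite mem_iota /= ltn_ord.
have /allP H2 := H _ Hi.
exact: (H2 _ Hj).
Qed.

Lemma drop_tl (A : Type) n (l : list A) : drop n (List.tl l) = drop n.+1 l.
Proof. by case: l. Qed.

Lemma jump_drop (A : Type) p (l : list A) : BinList.jump p l = drop (Pos.to_nat p) l.
Proof.
elim: p l => [p IH|p IH|] l /=.
- rewrite !IH drop_drop drop_tl Pos2Nat.inj_xI.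
  by have -> : ((Pos.to_nat p + Pos.to_nat p).+1 = S (2 * Pos.to_nat p)%coq_nat)%N by lia.
- rewrite !IH drop_drop Pos2Nat.inj_xO.
  by have -> : ((Pos.to_nat p + Pos.to_nat p) = (2 * Pos.to_nat p)%coq_nat)%N by lia.
- by case: l => [|? ?]; rewrite /= ?drop0.
Qed.

Lemma binnth (A : Type) (d : A) p (l : list A) : BinList.nth d p l = nth d l (Pos.to_nat p).-1.
Proof.
elim: p l => [p IH|p IH|] l.
- have -> : BinList.nth d p~1 l = BinList.nth d p (BinList.jump p (List.tl l)) by [].
  rewrite IH jump_drop drop_tl nth_drop Pos2Nat.inj_xI.
  have := Pos2Nat.is_pos p.
  by move=> ?; congr (nth d l _); lia.
- have -> : BinList.nth d p~0 l = BinList.nth d p (BinList.jump p l) by [].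
  rewrite IH jump_drop nth_drop Pos2Nat.inj_xO.
  have := Pos2Nat.is_pos p.
  by move=> ?; congr (nth d l _); lia.
- by case: l.
Qed.

Definition envl (g : nat -> F) (N : nat) : list F := mkseq (fun k => g k.+1) N.

Lemma ev_var_env g N j : (Pos.to_nat j <= N)%N -> ev (envl g N) (pv j) = g (Pos.to_nat j).
Proof.
move=> H; rewrite ev_var binnth /envl nth_mkseq; last by have := Pos2Nat.is_pos j; lia.
by have := Pos2Nat.is_pos j => ?; congr g; lia.
Qed.

Lemma to_nat_varf (b : positive) n : Pos.to_nat (b + Pos.of_nat n.+1) = (Pos.to_nat b + n.+1)%N.
Proof. by rewrite Pos2Nat.inj_add Nat2Pos.id. Qed.

End Eval.

Section Herm.
Variable F : fieldType.
Hypothesis H2 : (2%:R : F) != 0.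

Definition i0 : 'I_3 := @Ordinal 3 0 erefl.
Definition i1 : 'I_3 := @Ordinal 3 1 erefl.
Definition i2 : 'I_3 := @Ordinal 3 2 erefl.

Definition octc (o : oct F) (k : nat) : F :=
  match k with 0 => q0 o.1 | 1 => q1 o.1 | 2 => q2 o.1 | 3 => q3 o.1
  | 4 => q0 o.2 | 5 => q1 o.2 | 6 => q2 o.2 | _ => q3 o.2 end.

Definition coordx (x : mat3 F) (n : nat) : F :=
  if n == 0%N then q0 (x i0 i0).1 else if n == 1%N then q0 (x i1 i1).1
  else if n == 2%N then q0 (x i2 i2).1 else if (n < 11)%N then octc (x i0 i1) (n - 3)
  else if (n < 19)%N then octc (x i0 i2) (n - 11) else octc (x i1 i2) (n - 19).

Lemma eq_neg0 (c : F) : c = - c -> c = 0.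
Proof.
move=> e; have : 2%:R * c = 0 by rewrite mulr_natl mulr2n {1}e addNr.
by move/eqP; rewrite mulf_eq0 (negbTE H2) => /eqP.
Qed.
Lemma eq_neg1 (c : F) : c = -1 * c -> c = 0.
Proof. by rewrite mulN1r; apply: eq_neg0. Qed.

Lemma diag_form (o : oct F) : o = oconj o -> o = (Quat (q0 o.1) 0 0 0, Quat 0 0 0 0).
Proof.
case: o => [[a0 a1 a2 a3] [b0 b1 b2 b3]].
rewrite /oconj /qconj /qopp /qscale /= => [[]] /eq_neg0 -> /eq_neg0 -> /eq_neg0 ->.
by move=> /eq_neg1 -> /eq_neg1 -> /eq_neg1 -> /eq_neg1 ->.
Qed.

Lemma ord3E (i : 'I_3) : i = i0 \/ i = i1 \/ i = i2.
Proof.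
case: i => [[|[|[|?]]] Hi]; try by [].
- by left; apply: val_inj.
- by right; left; apply: val_inj.
- by right; right; apply: val_inj.
Qed.

Lemma herm_rep (L : list F) base (x : mat3 F) : Defs.hermitian x ->
  (forall n, (n < 27)%N -> ev L (varf base n) = coordx x n) ->
  evM L (herm (varf base)) = x.
Proof.
move=> hx Hc.
apply: FunctionalExtensionality.functional_extensionality => i.
apply: FunctionalExtensionality.functional_extensionality => j.
have off : forall k (i j : 'I_3), evo L (ov (varf base) k) = 
     (Quat (coordx x k) (coordx x k.+1) (coordx x k.+2) (coordx x k.+3),
      Quat (coordx x (k+4)) (coordx x (k+4).+1) (coordx x (k+4).+2) (coordx x (k+4).+3)) ->
     (k + 8 <= 27)%N -> evo L (ov (varf base) k) = x i j -> evo L (ov (varf base) k) = x i j.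
  by [].
have e01 : evo L (ov (varf base) 3) = x i0 i1.
  rewrite /evo /ov /evq /qv /= !Hc // /coordx /=.
  by case: (x i0 i1) => [[? ? ? ?] [? ? ? ?]].
have e02 : evo L (ov (varf base) 11) = x i0 i2.
  rewrite /evo /ov /evq /qv /= !Hc // /coordx /=.
  by case: (x i0 i2) => [[? ? ? ?] [? ? ? ?]].
have e12 : evo L (ov (varf base) 19) = x i1 i2.
  rewrite /evo /ov /evq /qv /= !Hc // /coordx /=.
  by case: (x i1 i2) => [[? ? ? ?] [? ? ? ?]].
have d : forall (i : 'I_3) k, ev L (varf base k) = q0 (x i i).1 ->
   evo L (dg (varf base k)) = x i i.
  move=> i' k Hm; rewrite /evo /dg /evq /= Hm.
  by rewrite [RHS]diag_form; last exact: hx.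
case: (ord3E i) => [->|[->|->]]; case: (ord3E j) => [->|[->|->]]; rewrite /evM /=.
- by apply: d => //; rewrite Hc.
- exact: e01.
- exact: e02.
- by rewrite evo_conj e01 -hx.
- by apply: d => //; rewrite Hc.
- exact: e12.
- by rewrite evo_conj e02 -hx.
- by rewrite evo_conj e12 -hx.
- by apply: d => //; rewrite Hc.
Qed.
End Herm.

Section Env.
Variable F : fieldType.
Variables (lam mu nu : F) (x a b c : mat3 F) (s t : F).

Definition gfun (k : nat) : F :=
 if (k < 5)%N then (if k == 1%N then lam else if k == 2%N then mu else if k == 3%N then nu else (2%:R)^-1)
 else if (k < 41)%N then coordx x (k - 5) else if (k < 81)%N then coordx a (k - 41)
 else if (k < 121)%N then coordx b (k - 81) else if (k < 150)%N then coordx c (k - 121)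
 else if k == 150%N then s else t.
Definition Lenv := envl gfun 160.

Lemma Lenv_lam : ev Lenv (pv 1) = lam. Proof. by rewrite ev_var_env. Qed.
Lemma Lenv_mu : ev Lenv (pv 2) = mu. Proof. by rewrite ev_var_env. Qed.
Lemma Lenv_nu : ev Lenv (pv 3) = nu. Proof. by rewrite ev_var_env. Qed.
Lemma Lenv_h : ev Lenv (pv 4) = (2%:R)^-1. Proof. by rewrite ev_var_env. Qed.
Lemma Lenv_s : ev Lenv (pv 150) = s. Proof. by rewrite ev_var_env. Qed.
Lemma Lenv_t : ev Lenv (pv 151) = t. Proof. by rewrite ev_var_env. Qed.

Lemma Lenv_x n : (n < 27)%N -> ev Lenv (varf 4 n) = coordx x n.
Proof.
move=> Hn; rewrite /varf ev_var_env; last by rewrite to_nat_varf /=; lia.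
rewrite to_nat_varf /=.
rewrite /gfun.
have -> : (4 + n.+1 < 5)%N = false by lia.
have -> : (4 + n.+1 < 41)%N = true by lia.
by congr coordx; lia.
Qed.
Lemma Lenv_a n : (n < 27)%N -> ev Lenv (varf 40 n) = coordx a n.
Proof.
move=> Hn; rewrite /varf ev_var_env; last by rewrite to_nat_varf /=; lia.
rewrite to_nat_varf /=.
rewrite /gfun.
have -> : (40 + n.+1 < 5)%N = false by lia.
have -> : (40 + n.+1 < 41)%N = false by lia.
have -> : (40 + n.+1 < 81)%N = true by lia.
by congr coordx; lia.
Qed.
Lemma Lenv_b n : (n < 27)%N -> ev Lenv (varf 80 n) = coordx b n.
Proof.
move=> Hn; rewrite /varf ev_var_env; last by rewrite to_nat_varf /=; lia.
rewrite to_nat_varf /=.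
rewrite /gfun.
have -> : (80 + n.+1 < 5)%N = false by lia.
have -> : (80 + n.+1 < 41)%N = false by lia.
have -> : (80 + n.+1 < 81)%N = false by lia.
have -> : (80 + n.+1 < 121)%N = true by lia.
by congr coordx; lia.
Qed.
Lemma Lenv_c n : (n < 27)%N -> ev Lenv (varf 120 n) = coordx c n.
Proof.
move=> Hn; rewrite /varf ev_var_env; last by rewrite to_nat_varf /=; lia.
rewrite to_nat_varf /=.
rewrite /gfun.
have -> : (120 + n.+1 < 5)%N = false by lia.
have -> : (120 + n.+1 < 41)%N = false by lia.
have -> : (120 + n.+1 < 81)%N = false by lia.
have -> : (120 + n.+1 < 121)%N = false by lia.
have -> : (120 + n.+1 < 150)%N = true by lia.
by congr coordx; lia.
Qed.
End Env.

Lemma checkJ_ok : checkJ = true.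
Proof. vm_cast_no_check (erefl true). Qed.
Lemma checkH_ok : checkH = true.
Proof. vm_cast_no_check (erefl true). Qed.
Lemma checkA_ok : checkA = true.
Proof. vm_cast_no_check (erefl true). Qed.
Lemma checkL_ok : checkL = true.
Proof. vm_cast_no_check (erefl true). Qed.
Lemma checkN_ok : checkN = true.
Proof. vm_cast_no_check (erefl true). Qed.


Definition Tr (F : fieldType) (m : mat3 F) := q0 (m i0 i0).1 + q0 (m i1 i1).1 + q0 (m i2 i2).1.

Lemma ev_strace (F : fieldType) (L : list F) m : ev L (strace m) = Tr (evM L m).
Proof. by rewrite /strace !ev_add. Qed.

Definition Dab (F : fieldType) (lam mu nu : F) (a b y : mat3 F) :=
  msub (jmul lam mu nu a (jmul lam mu nu b y)) (jmul lam mu nu b (jmul lam mu nu a y)).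

Section Shapes.
Variable F : fieldType.
Variable l : list F.
Hypothesis Hh : ev l (pv 4) = (2%:R)^-1.
Notation jp := (jmul (ev l (pv 1)) (ev l (pv 2)) (ev l (pv 3))).
Notation Dp := (Dab (ev l (pv 1)) (ev l (pv 2)) (ev l (pv 3))).

Lemma ev_sj A B : evM l (sj A B) = jp (evM l A) (evM l B).
Proof. exact: evM_jmul. Qed.
Lemma ev_sDD A B Y : evM l (sDD A B Y) = Dp (evM l A) (evM l B) (evM l Y).
Proof. by rewrite /sDD /sD evM_sub !evM_jmul. Qed.
Lemma shJ1 A B Y : evM l (sDD A B (sj Y Y)) = Dp (evM l A) (evM l B) (jp (evM l Y) (evM l Y)).
Proof. by rewrite ev_sDD ev_sj. Qed.
Lemma shJ2 A B Y : evM l (smscale (pc (Zpos (xO xH))) (sj (sDD A B Y) Y)) =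
   mscale 2%:R (jp (Dp (evM l A) (evM l B) (evM l Y)) (evM l Y)).
Proof. by rewrite evM_scale ev_sj ev_sDD ev_c2. Qed.
Lemma shA1 A B C : ev l (strace (sj (sj A B) C)) = Tr (jp (jp (evM l A) (evM l B)) (evM l C)).
Proof. by rewrite ev_strace !ev_sj. Qed.
Lemma shA2 A B C : ev l (strace (sj A (sj B C))) = Tr (jp (evM l A) (jp (evM l B) (evM l C))).
Proof. by rewrite ev_strace !ev_sj. Qed.
Lemma shL1 A B C : evM l (sj (smadd (smscale (pv 150) A) (smscale (pv 151) B)) C) =
  jp (madd (mscale (ev l (pv 150)) (evM l A)) (mscale (ev l (pv 151)) (evM l B))) (evM l C).
Proof. by rewrite ev_sj evM_add !evM_scale. Qed.
Lemma shL2 A B C : evM l (smadd (smscale (pv 150) (sj A C)) (smscale (pv 151) (sj B C))) =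
  madd (mscale (ev l (pv 150)) (jp (evM l A) (evM l C))) (mscale (ev l (pv 151)) (jp (evM l B) (evM l C))).
Proof. by rewrite evM_add (evM_scale _ (pv 150)) (evM_scale _ (pv 151)) !ev_sj. Qed.
Lemma shN1 A k : ev l (strace (sj A (herm (unitf k)))) = Tr (jp (evM l A) (evM l (herm (unitf k)))).
Proof. by rewrite ev_strace ev_sj. Qed.
End Shapes.

Section Main.
Variable F : fieldType.
Variables lam mu nu : F.
Hypotheses (H2 : (2%:R : F) != 0) (Hl : lam != 0) (Hm : mu != 0) (Hn : nu != 0).
Notation jm := (jmul lam mu nu).
Notation herm3 := (@Defs.hermitian F).
Notation Dab := (Dab lam mu nu).


Lemma evM_stc (L : list F) m (i j : 'I_3) : evM L (stc m) i j = oconj (evM L m j i).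
Proof. by rewrite /evM /stc mget_tab evo_conj. Qed.

Lemma herm_evM (L : list F) f : herm3 (evM L (herm f)).
Proof.
have cc : forall o : oct F, oconj (oconj o) = o.
  by case=> [[? ? ? ?] [? ? ? ?]]; rewrite /oconj /qconj /qopp /qscale /= !opprK !mulN1r !opprK.
move=> i j; case: (ord3E i) => [->|[->|->]]; case: (ord3E j) => [->|[->|->]];
  rewrite /evM /= ?evo_conj ?cc //;
  by rewrite /evo /dg /evq /= /oconj /qconj /qopp /qscale /= oppr0 !mulr0.
Qed.

Lemma evM_herm_zero (L : list F) f : (forall n, (n < 27)%N -> ev L (f n) = 0) -> evM L (herm f) = mzero F.
Proof.
move=> Hz.
apply: FunctionalExtensionality.functional_extensionality => i.
apply: FunctionalExtensionality.functional_extensionality => j.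
case: (ord3E i) => [->|[->|->]]; case: (ord3E j) => [->|[->|->]];
  rewrite /evM /= ?evo_conj /evo /ov /dg /evq /qv /= !Hz //;
  by rewrite /oconj /qconj /qopp /qscale /= ?oppr0 ?mulr0.
Qed.


Lemma jm_herm u v : herm3 u -> herm3 v -> herm3 (jm u v).
Proof.
move=> hu hv.
pose L := Lenv lam mu nu u v u u 0 0.
have Hh : ev L (pv 4) = (2%:R)^-1 := Lenv_h lam mu nu u v u u 0 0.
have E0 := evM_eq L checkH_ok.
have E : forall i j, evM L (sj XX XA) i j = oconj (evM L (sj XX XA) j i) :=
  fun i j => etrans (congr1 (fun m => m i j) E0) (evM_stc L _ i j).
rewrite (ev_sj Hh XX XA) in E.
have ex : evM L XX = u := herm_rep H2 hu (@Lenv_x _ lam mu nu u v u u 0 0).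
have ea : evM L XA = v := herm_rep H2 hv (@Lenv_a _ lam mu nu u v u u 0 0).
rewrite ex ea Lenv_lam Lenv_mu Lenv_nu in E.
exact: E.
Qed.

Lemma J_F a b x : herm3 a -> herm3 b -> herm3 x ->
  Dab a b (jm x x) = mscale 2%:R (jm (Dab a b x) x).
Proof.
move=> ha hb hx.
pose L := Lenv lam mu nu x a b x 0 0.
have Hh : ev L (pv 4) = (2%:R)^-1 := Lenv_h lam mu nu x a b x 0 0.
have E := etrans (esym (shJ1 Hh XA XB XX)) (etrans (evM_eq L checkJ_ok) (shJ2 Hh XA XB XX)).
have ex : evM L XX = x := herm_rep H2 hx (@Lenv_x _ lam mu nu x a b x 0 0).
have ea : evM L XA = a := herm_rep H2 ha (@Lenv_a _ lam mu nu x a b x 0 0).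
have eb : evM L XB = b := herm_rep H2 hb (@Lenv_b _ lam mu nu x a b x 0 0).
rewrite ex ea eb Lenv_lam Lenv_mu Lenv_nu in E.
exact: E.
Qed.

Lemma Tr_assoc u v w : herm3 u -> herm3 v -> herm3 w ->
  Tr (jm (jm u v) w) = Tr (jm u (jm v w)).
Proof.
move=> hu hv hw.
pose L := Lenv lam mu nu u v w u 0 0.
have Hh : ev L (pv 4) = (2%:R)^-1 := Lenv_h lam mu nu u v w u 0 0.
have E := etrans (esym (shA1 Hh XX XA XB)) (etrans (ev_eq L checkA_ok) (shA2 Hh XX XA XB)).
have ex : evM L XX = u := herm_rep H2 hu (@Lenv_x _ lam mu nu u v w u 0 0).
have ea : evM L XA = v := herm_rep H2 hv (@Lenv_a _ lam mu nu u v w u 0 0).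
have eb : evM L XB = w := herm_rep H2 hw (@Lenv_b _ lam mu nu u v w u 0 0).
rewrite ex ea eb Lenv_lam Lenv_mu Lenv_nu in E.
exact: E.
Qed.

Lemma jm_lin u v w (s t : F) : herm3 u -> herm3 v -> herm3 w ->
  jm (madd (mscale s u) (mscale t v)) w = madd (mscale s (jm u w)) (mscale t (jm v w)).
Proof.
move=> hu hv hw.
pose L := Lenv lam mu nu u v w u s t.
have Hh : ev L (pv 4) = (2%:R)^-1 := Lenv_h lam mu nu u v w u s t.
have E := etrans (esym (shL1 Hh XX XA XB)) (etrans (evM_eq L checkL_ok) (shL2 Hh XX XA XB)).
have ex : evM L XX = u := herm_rep H2 hu (@Lenv_x _ lam mu nu u v w u s t).
have ea : evM L XA = v := herm_rep H2 hv (@Lenv_a _ lam mu nu u v w u s t).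
have eb : evM L XB = w := herm_rep H2 hw (@Lenv_b _ lam mu nu u v w u s t).
rewrite ex ea eb Lenv_lam Lenv_mu Lenv_nu Lenv_s Lenv_t in E.
exact: E.
Qed.

Lemma ev_z4 (L : list F) : ev L (pc z4) = 2%:R * 2%:R.
Proof. rewrite /ev /phiZ /=; ring. Qed.
Lemma ev_mz4 (L : list F) : ev L (pc (Z.opp z4)) = - (2%:R * 2%:R).
Proof. rewrite /ev /phiZ /=; ring. Qed.

Lemma nondeg m : herm3 m -> (forall z, herm3 z -> Tr (jm m z) = 0) -> m = mzero F.
Proof.
move=> hm0 Hz.
pose L := Lenv lam mu nu m m m m 0 0.
have Hh : ev L (pv 4) = (2%:R)^-1 := Lenv_h lam mu nu m m m m 0 0.
have ex : evM L XX = m := herm_rep H2 hm0 (@Lenv_x _ lam mu nu m m m m 0 0).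
have h4 : (2%:R * 2%:R : F) != 0 by rewrite mulf_neq0.
have hh : ((2%:R)^-1 : F) != 0 by rewrite invr_eq0.
have nz : forall k, (k < 27)%N -> ev L (ck k) != 0.
  move=> k _; rewrite /ck; case: ifP => _; first by rewrite ev_mul ev_c2 Hh mulf_neq0.
  have : ((k - 3) %% 8 < 8)%N by rewrite ltn_pmod.
  move: ((k - 3) %% 8)%N => c.
  rewrite !ev_mul Hh.
  case: c => [|[|[|[|[|[|[|[|c]]]]]]]] // _;
  cbv beta iota delta [zc monc vlam vmu vnu];
  rewrite ?ev_z4 ?ev_mz4 ?ev_mul ?Lenv_lam ?Lenv_mu ?Lenv_nu ?ev_c1 ?oppr_eq0;
  repeat apply: mulf_neq0 => //; by rewrite ?oppr_eq0 ?oner_eq0.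
have Hc : forall k, (k < 27)%N -> coordx m k = 0.
  move=> k Hk.
  have hk : k \in iota 0 27 by rewrite mem_iota.
  have /(ev_eq L) E := allP checkN_ok k hk.
  have E2 := etrans (esym (shN1 Hh XX k)) E.
  rewrite ex Lenv_lam Lenv_mu Lenv_nu ev_mul (Lenv_x _ _ _ _ _ _ _ _ _ Hk) in E2.
  rewrite Hz in E2; last exact: herm_evM.
  move/eqP: E2; rewrite eq_sym mulf_eq0 (negbTE (nz k Hk)) /= => /eqP; by [].
suff : evM L XX = mzero F by rewrite ex.
rewrite /XX; apply: evM_herm_zero => n Hn0.
by rewrite (Lenv_x _ _ _ _ _ _ _ _ _ Hn0) Hc.
Qed.

End Main.


Section Lin.
Variable F : fieldType.
Notation herm3 := (@Defs.hermitian F).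

Definition cf (m : mat3 F) i j k := octc (m i j) k.

Lemma cf_ext (m m' : mat3 F) : (forall i j k, cf m i j k = cf m' i j k) -> m = m'.
Proof.
move=> H.
apply: FunctionalExtensionality.functional_extensionality => i.
apply: FunctionalExtensionality.functional_extensionality => j.
have := H i j; rewrite /cf.
case: (m i j) (m' i j) => [[? ? ? ?] [? ? ? ?]] [[? ? ? ?] [? ? ? ?]] Hk.
by move: (Hk 0%N) (Hk 1%N) (Hk 2%N) (Hk 3%N) (Hk 4%N) (Hk 5%N) (Hk 6%N) (Hk 7%N) => /= -> -> -> -> -> -> -> ->.
Qed.

Lemma cf_add x y i j k : cf (madd x y) i j k = cf x i j k + cf y i j k.
Proof.
rewrite /cf /madd; case: (x i j) (y i j) => [[? ? ? ?] [? ? ? ?]] [[? ? ? ?] [? ? ? ?]].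
by case: k => [|[|[|[|[|[|[|k]]]]]]].
Qed.
Lemma cf_scale c x i j k : cf (mscale c x) i j k = c * cf x i j k.
Proof.
rewrite /cf /mscale; case: (x i j) => [[? ? ? ?] [? ? ? ?]].
by case: k => [|[|[|[|[|[|[|k]]]]]]].
Qed.
Lemma cf_zero i j k : cf (mzero F) i j k = 0.
Proof. by case: k => [|[|[|[|[|[|[|k]]]]]]]. Qed.

Ltac lin := apply: cf_ext => i j k; rewrite /msub !(cf_add, cf_scale, cf_zero); ring.

Lemma oconj_add (a b : oct F) : oconj (oadd a b) = oadd (oconj a) (oconj b).
Proof.
case: a b => [[? ? ? ?] [? ? ? ?]] [[? ? ? ?] [? ? ? ?]].
rewrite /oconj /oadd /qadd /qconj /qopp /qscale /=; congr (_, _); congr Quat; ring.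
Qed.
Lemma oconj_scale c (a : oct F) : oconj (oscale c a) = oscale c (oconj a).
Proof.
case: a => [[? ? ? ?] [? ? ? ?]].
rewrite /oconj /oscale /qconj /qopp /qscale /=; congr (_, _); congr Quat; ring.
Qed.

Lemma herm_add x y : herm3 x -> herm3 y -> herm3 (madd x y).
Proof. by move=> hx hy i j; rewrite /madd hx hy oconj_add. Qed.
Lemma herm_scale c x : herm3 x -> herm3 (mscale c x).
Proof. by move=> hx i j; rewrite /mscale hx oconj_scale. Qed.
Lemma herm_zero : herm3 (mzero F).
Proof. by move=> i j; rewrite /mzero /oconj /ozero /qconj /qopp /qscale /qzero /= oppr0 mulr0. Qed.
Lemma herm_sub x y : herm3 x -> herm3 y -> herm3 (msub x y).
Proof. by move=> hx hy; apply: herm_add => //; apply: herm_scale. Qed.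
Lemma herm_lc a b x y : herm3 x -> herm3 y -> herm3 (madd (mscale a x) (mscale b y)).
Proof. by move=> hx hy; apply: herm_add; apply: herm_scale. Qed.

Lemma Tr_add (x y : mat3 F) : Tr (madd x y) = Tr x + Tr y.
Proof. rewrite /Tr /madd /oadd /qadd /=; ring. Qed.
Lemma Tr_scale c (x : mat3 F) : Tr (mscale c x) = c * Tr x.
Proof. rewrite /Tr /mscale /oscale /qscale /=; ring. Qed.

Variables lam mu nu : F.
Notation jm := (jmul lam mu nu).

Lemma jm_comm u v : jm u v = jm v u.
Proof.
apply: cf_ext => i j k; rewrite /jmul !cf_scale !cf_add; ring.
Qed.
End Lin.

Section Final.
Variable F : fieldType.
Variables lam mu nu : F.
Hypotheses (H2 : (2%:R : F) != 0) (Hl : lam != 0) (Hm : mu != 0) (Hn : nu != 0).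
Notation jm := (jmul lam mu nu).
Notation herm3 := (@Defs.hermitian F).
Notation inner := (inner_der lam mu nu).

Ltac lin := apply: cf_ext => i j k; rewrite /msub !(cf_add, cf_scale, cf_zero); ring.

Lemma jmH u v : herm3 u -> herm3 v -> herm3 (jm u v).
Proof. exact: (jm_herm lam mu nu H2 (u:=u) (v:=v)). Qed.

Lemma jm_zero x : herm3 x -> jm (mzero F) x = mzero F.
Proof.
move=> hx.
have -> : mzero F = madd (mscale 0 x) (mscale 0 x) by lin.
rewrite (jm_lin lam mu nu H2) //; lin.
Qed.

Lemma jm_lin_r u v w (s t : F) : herm3 u -> herm3 v -> herm3 w ->
  jm w (madd (mscale s u) (mscale t v)) = madd (mscale s (jm w u)) (mscale t (jm w v)).
Proof. by move=> hu hv hw; rewrite jm_comm (jm_lin lam mu nu H2) // (jm_comm _ _ _ u) (jm_comm _ _ _ v). Qed.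

Lemma Tr_jm_lin u v w (s t : F) : herm3 u -> herm3 v -> herm3 w ->
  Tr (jm (madd (mscale s u) (mscale t v)) w) = s * Tr (jm u w) + t * Tr (jm v w).
Proof. by move=> hu hv hw; rewrite (jm_lin lam mu nu H2) // Tr_add !Tr_scale. Qed.

Lemma Tr_jm_comm u v : Tr (jm u v) = Tr (jm v u).
Proof. by rewrite jm_comm. Qed.

Lemma msubE (x y : mat3 F) : msub x y = madd (mscale 1 x) (mscale (-1) y).
Proof. lin. Qed.

Lemma Dab_herm a b x : herm3 a -> herm3 b -> herm3 x -> herm3 (Dab lam mu nu a b x).
Proof. by move=> ha hb hx; apply: herm_sub; apply: jmH => //; apply: jmH. Qed.

Lemma Tr_swap a y x : herm3 a -> herm3 y -> herm3 x ->
  Tr (jm (jm a y) x) = Tr (jm y (jm a x)).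
Proof.
move=> ha hy hx.
by rewrite (jm_comm _ _ _ a y) (Tr_assoc lam mu nu H2).
Qed.
Lemma Tr_swap2 b x z : herm3 b -> herm3 x -> herm3 z ->
  Tr (jm (jm b x) z) = Tr (jm x (jm b z)).
Proof.
move=> hb hx hz.
by rewrite (jm_comm _ _ _ b x) (Tr_assoc lam mu nu H2).
Qed.

Lemma Dab_skew a b x y : herm3 a -> herm3 b -> herm3 x -> herm3 y ->
  Tr (jm (Dab lam mu nu a b x) y) = - Tr (jm x (Dab lam mu nu a b y)).
Proof.
move=> ha hb hx hy.
have bx := jmH hb hx; have abx := jmH ha bx; have ax := jmH ha hx; have bax := jmH hb ax.
have by_ := jmH hb hy; have aby := jmH ha by_; have ay := jmH ha hy; have bay := jmH hb ay.
rewrite /Dab !msubE Tr_jm_lin // jm_lin_r // Tr_add (Tr_scale 1) (Tr_scale (-1)).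
rewrite (Tr_swap ha bx hy) (Tr_swap2 hb hx ay) (Tr_swap hb ax hy) (Tr_swap2 ha hx by_).
ring.
Qed.

Lemma inner_cons a b s x : inner ((a, b) :: s) x = madd (Dab lam mu nu a b x) (inner s x).
Proof. by []. Qed.
Lemma inner_nil x : inner [::] x = mzero F.
Proof. by []. Qed.

Lemma inner_herm s x : herm_pairs s -> herm3 x -> herm3 (inner s x).
Proof.
elim: s => [|[a b] s IH]; first by move=> _ _; rewrite inner_nil; exact: herm_zero.
rewrite inner_cons; case=> /= ha hb hs hx; apply: herm_add; last exact: IH.
exact: Dab_herm.
Qed.

Lemma madd11 (u v : mat3 F) : madd u v = madd (mscale 1 u) (mscale 1 v).
Proof. lin. Qed.

Lemma inner_skew s x y : herm_pairs s -> herm3 x -> herm3 y ->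
  Tr (jm (inner s x) y) = - Tr (jm x (inner s y)).
Proof.
elim: s => [|[a b] s IH].
  move=> _ hx hy; rewrite !inner_nil jm_zero // (jm_comm _ _ _ x) jm_zero //.
  rewrite /Tr /mzero /=; ring.
rewrite !inner_cons; case=> /= ha hb hs hx hy.
have hIx := inner_herm hs hx; have hIy := inner_herm hs hy.
have hDx := Dab_herm ha hb hx; have hDy := Dab_herm ha hb hy.
rewrite (madd11 _ (inner s x)) (madd11 _ (inner s y)) Tr_jm_lin //.
rewrite jm_lin_r // Tr_add !(Tr_scale 1).
rewrite (Dab_skew ha hb hx hy) IH //; ring.
Qed.

Lemma inner_sq s x : herm_pairs s -> herm3 x ->
  inner s (jm x x) = mscale 2%:R (jm (inner s x) x).
Proof.
elim: s => [|[a b] s IH].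
  by move=> _ hx; rewrite !inner_nil jm_zero //; lin.
rewrite !inner_cons; case=> /= ha hb hs hx.
have hIx := inner_herm hs hx; have hDx := Dab_herm ha hb hx.
rewrite (J_F lam mu nu H2 ha hb hx) IH //.
rewrite (madd11 _ (inner s x)) (jm_lin lam mu nu H2) //.
lin.
Qed.

Lemma two_cancel (X Y : F) : 2%:R * (X - Y) = 0 -> X = Y.
Proof. by move/eqP; rewrite mulf_eq0 (negbTE H2) subr_eq0 => /eqP. Qed.

Section Delta.
Variable Delta : mat3 F -> mat3 F.
Hypothesis HD : two_local_inner lam mu nu Delta.

Lemma d1 x : herm3 x -> herm3 (Delta x).
Proof. by move=> hx; case: (HD hx hx) => s [hs [-> _]]; exact: inner_herm. Qed.
Lemma d2 x y : herm3 x -> herm3 y -> Tr (jm (Delta x) y) = - Tr (jm x (Delta y)).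
Proof. by move=> hx hy; case: (HD hx hy) => s [hs [-> ->]]; exact: inner_skew. Qed.
Lemma d3 x : herm3 x -> Delta (jm x x) = mscale 2%:R (jm (Delta x) x).
Proof.
move=> hx; case: (HD hx (jmH hx hx)) => s [hs [e1 e2]].
by rewrite e2 e1; exact: inner_sq.
Qed.

Lemma Dlin a b x y : herm3 x -> herm3 y ->
  Delta (madd (mscale a x) (mscale b y)) = madd (mscale a (Delta x)) (mscale b (Delta y)).
Proof.
move=> hx hy.
have hw := herm_lc a b hx hy.
have hDx := d1 hx; have hDy := d1 hy; have hDw := d1 hw.
have hc := herm_lc a b hDx hDy.
have hr := herm_lc 1 (-1) hDw hc.
have r0 := nondeg H2 Hl Hm Hn hr.
have {}r0 : madd (mscale 1 (Delta (madd (mscale a x) (mscale b y)))) (mscale (-1) (madd (mscale a (Delta x)) (mscale b (Delta y)))) = mzero F.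
  apply: r0 => z hz.
  have hDz := d1 hz.
  rewrite Tr_jm_lin // Tr_jm_lin // d2 // d2 // d2 // Tr_jm_lin //; ring.
apply: cf_ext => i j k; have := congr1 (fun m => cf m i j k) r0.
rewrite !(cf_add, cf_scale, cf_zero) => e.
apply/eqP; rewrite -subr_eq0; apply/eqP; rewrite -e; ring.
Qed.

Lemma Dleib x y : herm3 x -> herm3 y ->
  Delta (jm x y) = madd (jm (Delta x) y) (jm x (Delta y)).
Proof.
move=> hx hy.
have hs := herm_lc 1 1 hx hy.
have hxx := jmH hx hx; have hxy := jmH hx hy; have hyy := jmH hy hy.
have hDx := d1 hx; have hDy := d1 hy.
have E := d3 hs.
have jss : jm (madd (mscale 1 x) (mscale 1 y)) (madd (mscale 1 x) (mscale 1 y)) =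
   madd (mscale 1 (madd (mscale 1 (jm x x)) (mscale 1 (jm x y))))
        (mscale 1 (madd (mscale 1 (jm x y)) (mscale 1 (jm y y)))).
  by rewrite (jm_lin lam mu nu H2) // !jm_lin_r // (jm_comm _ _ _ y x).
have h1 := herm_lc 1 1 hxx hxy; have h2 := herm_lc 1 1 hxy hyy.
rewrite jss in E.
rewrite (Dlin _ _ h1 h2) in E.
rewrite (Dlin _ _ hxx hxy) (Dlin _ _ hxy hyy) (d3 hx) (d3 hy) in E.
rewrite (Dlin _ _ hx hy) in E.
rewrite (jm_lin lam mu nu H2 _ _ hDx hDy hs) in E.
rewrite (jm_lin_r _ _ hx hy hDx) (jm_lin_r _ _ hx hy hDy) in E.
rewrite (jm_comm _ _ _ (Delta y) x) in E.
move: E; move: (Delta (jm x y)) (jm (Delta x) x) (jm (Delta x) y) (jm x (Delta y)) (jm (Delta y) y) => A Bx C D By E.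
apply: cf_ext => i j k; have := congr1 (fun m => cf m i j k) E.
rewrite !(cf_add, cf_scale) => e.
move/eqP: e; rewrite -subr_eq0 => /eqP e.
apply: two_cancel; rewrite -e; ring.
Qed.

Lemma is_der : is_derivation lam mu nu Delta.
Proof.
split.
- by move=> a b x y hx hy; exact: Dlin.
- by move=> x y hx hy; exact: Dleib.
Qed.
End Delta.
End Final.

Unset Implicit Arguments.

Theorem theorem3p5 (F : closedFieldType) (lam mu nu : F) :
  ~~ (2%N \in [pchar F]) ->
  lam != 0 -> mu != 0 -> nu != 0 ->
  forall Delta : mat3 F -> mat3 F,
    two_local_inner lam mu nu Delta -> is_derivation lam mu nu Delta.
Proof.
move=> hc hl hm hn Delta HD.
have H2 : (2%:R : F) != 0 by move: hc; rewrite inE /=.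
exact: (is_der H2 hl hm hn HD).
Qed.
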